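(* Let $M\ge 0$. Given an infinite antichain $S_1,S_2,\dots$ in the poset $(\mathrm{RL},\le_{RL})$, where $S_i$ is a reading list of type $(d_i,n_i)$, at least one of the sequences $(n_i)_i$ and $(d_i)_i$ is bounded.
   Context: Fix an integer $M\ge0$. A reading list of type $(d,n)$ is a tuple $S=(S^1,\dots,S^n)$ of $d$-element subsets of $[Md]=\{1,\dots,Md\}$ (each $S^i$ viewed as an increasing word). $\mathrm{RL}$ denotes the set of all reading lists of all types. For $S=(S^1,\dots,S^n)$ of type $(d,n)$ and $T=(T^1,\dots,T^m)$ of type $(e,m)$, define $S\le_{RL}T$ iff there exist indices $1\le k_1<k_2<\cdots<k_n\le m$ and maps $f_i:S^i\to T^{k_i}$ ($i=1,\dots,n$), each strictly increasing, such that $f_i(x)=f_j(x)$ for all $i,j$ and all $x\in S^i\cap S^j$. An antichain is a sequence of pairwise incomparable elements. *)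

(* Defs.v *)
From mathcomp Require Import all_boot.
Set Implicit Arguments. Unset Strict Implicit. Unset Printing Implicit Defensive.

(* A reading list: its parameter d together with the tuple (S^1,...,S^n),
   stored as a list (0-indexed) of words; each word is the increasing
   enumeration of a d-element subset of [Md] = {1,...,M*d}. *)
Record RL := mkRL { rl_d : nat; rl_sets : seq (seq nat) }.

Definition rl_n (S : RL) : nat := size (rl_sets S).

Definition rl_at (S : RL) (i : nat) : seq nat := nth [::] (rl_sets S) i.

Definition is_RL (M : nat) (S : RL) : Prop :=
  all (fun s => [&& sorted ltn s, size s == rl_d S &
                    all (fun x => (1 <= x) && (x <= M * rl_d S)) s])
      (rl_sets S).

Definition le_RL (S T : RL) : Prop :=
  exists (k : nat -> nat) (f : nat -> nat -> nat),
    [/\ (forall i, i.+1 < rl_n S -> k i < k i.+1),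
        (forall i, i < rl_n S -> k i < rl_n T),
        (forall i x, i < rl_n S -> x \in rl_at S i -> f i x \in rl_at T (k i)),
        (forall i x y, i < rl_n S -> x \in rl_at S i -> y \in rl_at S i ->
                       x < y -> f i x < f i y) &
        (forall i j x, i < rl_n S -> j < rl_n S ->
                       x \in rl_at S i -> x \in rl_at S j -> f i x = f j x)].

Definition is_infinite_antichain (M : nat) (S : nat -> RL) : Prop :=
  (forall i, is_RL M (S i)) /\
  (forall i j, i <> j -> ~ le_RL (S i) (S j)).

(* Main.v *)
Require Import Defs.
From mathcomp Require Import all_boot zify.
From Stdlib Require Import Classical ClassicalEpsilon.
Set Implicit Arguments. Unset Strict Implicit. Unset Printing Implicit Defensive.

Section Higman.
Variable T : eqType.
Variable alph : seq T.

Lemma pigeon (h : nat -> T) (al : seq T) N0 :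
  (forall n, N0 <= n -> h n \in al) ->
  exists a, forall N, exists n, N <= n /\ h n = a.
Proof.
elim: al N0 => [|b al IH] N0 H.
  by move: (H N0 (leqnn _)); rewrite in_nil.
case: (classic (exists N1, forall n, N1 <= n -> h n <> b)) => [[N1 HN1]|Hno].
  apply: (IH (maxn N0 N1)) => n; rewrite geq_max => /andP[h0 h1].
  move: (H n h0); rewrite in_cons => /orP[/eqP E|//].
  by case: (HN1 n h1 E).
exists b => N; apply: NNPP => Hn; apply: Hno; exists N => n Nn E.
by apply: Hn; exists n.
Qed.

Definition bad (w : nat -> seq T) := forall i j, i < j -> ~~ subseq (w i) (w j).

Definition Ext (p : seq (seq T)) := exists g, [/\ bad g,
  (forall i, i < size p -> g i = nth [::] p i) &
  (forall i, {subset g i <= alph})].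

Definition mbP p x := Ext (rcons p x) /\ forall y, size y < size x -> ~ Ext (rcons p y).

Lemma mb_exists p : Ext p -> exists x, mbP p x.
Proof.
move=> [g [bg pg ag]].
have ex : exists n, (if excluded_middle_informative
      (exists x, size x = n /\ Ext (rcons p x)) then true else false).
  exists (size (g (size p))).
  case: excluded_middle_informative => // [[]]; exists (g (size p)); split=> //.
  exists g; split=> // i; rewrite size_rcons ltnS leq_eqVlt => /orP[/eqP->|lt].
    by rewrite nth_rcons ltnn eqxx.
  by rewrite nth_rcons lt pg.
case: (ex_minnP ex) => n; case: excluded_middle_informative => // [[x [sx ex']]] _ mn.
exists x; split=> // y sy ey.
have : n <= size y.
  apply: mn; case: excluded_middle_informative => // [[]]; by exists y.
by rewrite -sx leqNgt sy.
Qed.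

Definition mb p := epsilon (inhabits [::]) (mbP p).

Fixpoint P n := if n is n'.+1 then rcons (P n') (mb (P n')) else [::].
Definition f n := mb (P n).

Lemma size_P n : size (P n) = n.
Proof. by elim: n => //= n IH; rewrite size_rcons IH. Qed.

Lemma nth_P m i : i < m -> nth [::] (P m) i = f i.
Proof.
elim: m => // m IH; rewrite ltnS leq_eqVlt => /orP[/eqP->|lt] /=.
  by rewrite nth_rcons size_P ltnn eqxx.
by rewrite nth_rcons size_P lt IH.
Qed.

Hypothesis ex0 : Ext [::].

Lemma Ext_P n : Ext (P n) /\ mbP (P n) (f n).
Proof.
elim: n => [|n [IH _]].
  split=> //; exact: (epsilon_spec _ _ (mb_exists ex0)).
have H := epsilon_spec (inhabits [::]) _ (mb_exists IH).
split; first by case: H.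
exact: (epsilon_spec _ _ (mb_exists (proj1 H))).
Qed.

Lemma f_bad : bad f.
Proof.
move=> i j ij.
case: (Ext_P j.+1) => [[g [bg pg _]] _].
have := bg i j ij.
rewrite !pg ?size_P ?nth_P //; exact: ltn_trans ij _.
Qed.

Lemma f_alph n : {subset f n <= alph}.
Proof.
case: (Ext_P n.+1) => [[g [_ pg ag]] _].
by rewrite -(nth_P (ltnSn n)) -pg ?size_P.
Qed.

Lemma f_ne n : f n != [::].
Proof.
apply/negP => /eqP E; have := f_bad (ltnSn n); by rewrite E sub0seq.
Qed.

End Higman.

Lemma false_of_bad (T : eqType) (alph : seq T) : ~ Ext alph [::].
Proof.
move=> ex0.
set f := f alph.
have [x0 _] : exists x0 : T, True.
  have := f_ne ex0 0; rewrite -/f; case: (f 0) => // x0 _ _; by exists x0.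
pose h n := head x0 (f n).
have hal : forall n, h n \in alph.
  move=> n; rewrite /h; have := f_ne ex0 n; have := f_alph ex0 (n:=n).
  rewrite -/f; case: (f n) => //= a s Hs _; apply: Hs; exact: mem_head.
case: (pigeon (N0:=0) (al:=alph) (h:=h) (fun n _ => hal n)) => a Ha.
have exN : forall N, exists n, (N <= n) && (h n == a).
  move=> N; case: (Ha N) => n [Nn E]; exists n; by rewrite Nn E eqxx.
pose nxt N := ex_minn (exN N).
have nxtP : forall N, N <= nxt N /\ h (nxt N) = a.
  move=> N; rewrite /nxt; case: ex_minnP => n /andP[? /eqP ?] _; by [].
pose phi k := iter k (fun x => nxt x.+1) (nxt 0).
have phiS : forall k, phi k < phi k.+1.
  by move=> k; rewrite /phi iterS; case: (nxtP (phi k).+1).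
have phimono : forall k1 k2, k1 < k2 -> phi k1 < phi k2.
  move=> k1; elim=> // k2 IH; rewrite ltnS leq_eqVlt => /orP[/eqP->//|lt].
  exact: ltn_trans (IH lt) (phiS k2).
have phia : forall k, h (phi k) = a.
  case=> [|k]; rewrite /phi ?iterS; [exact: (proj2 (nxtP 0)) | exact: (proj2 (nxtP _))].
have phige : forall k, phi 0 <= phi k.
  by case=> // k; apply: ltnW; apply: phimono.
have fcons : forall k, f (phi k) = a :: behead (f (phi k)).
  move=> k; have := f_ne ex0 (phi k); have := phia k; rewrite /h -/f.
  by case: (f (phi k)) => //= b s ->.
pose p0 := phi 0.
pose g n := if n < p0 then f n else behead (f (phi (n - p0))).
have fb := f_bad ex0; rewrite -/f in fb.
have gbad : bad g.
  move=> i j ij; rewrite /g.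
  case: ifP => ip0; case: ifP => jp0.
  - exact: fb.
  - apply/negP => sub; have := fb i (phi (j - p0)).
    rewrite (leq_trans ip0 (phige _)) => /(_ isT) /negP; apply.
    apply: subseq_trans sub _; rewrite {2}fcons; exact: subseq_cons.
  - by move: (ltn_trans ij jp0); rewrite ip0.
  - apply/negP => sub.
    have lt : i - p0 < j - p0.
      by rewrite ltn_sub2rE // leqNgt ip0.
    have := fb _ _ (phimono _ _ lt); rewrite fcons (fcons (j - p0)) /=.
    by rewrite eqxx sub.
have := Ext_P ex0 p0 => -[_ [_ minimal]].
apply: (minimal (g p0)).
  rewrite /g ltnn subnn /=; rewrite -/f /p0 [X in _ < size X]fcons /=; exact: ltnSn.
exists g; split=> //.
  move=> i; rewrite size_rcons size_P ltnS leq_eqVlt => /orP[/eqP->|lt].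
    by rewrite nth_rcons size_P ltnn eqxx.
  by rewrite nth_rcons size_P lt nth_P // /g lt.
move=> i; rewrite /g; case: ifP => _; first exact: f_alph.
move=> x xb; apply: (f_alph ex0 (n:=phi (i - p0))); rewrite -/f fcons in_cons xb orbT.
  done.
Qed.

Theorem higman (T : eqType) (alph : seq T) (w : nat -> seq T) :
  (forall n, {subset w n <= alph}) -> exists i j, i < j /\ subseq (w i) (w j).
Proof.
move=> Hw; apply: NNPP => Hn; apply: (@false_of_bad T alph).
exists w; split=> //.
move=> i j ij; apply/negP => s; apply: Hn; by exists i, j.
Qed.

Lemma subseq_idx (s t : seq (seq nat)) : subseq s t ->
  exists k : nat -> nat, (forall i, i.+1 < size s -> k i < k i.+1) /\
    (forall i, i < size s -> k i < size t /\ nth [::] s i = nth [::] t (k i)).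
Proof.
elim: t s => [|y t IH] s.
  by rewrite subseq0 => /eqP ->; exists id.
case: s => [|x s]; first by move=> _; exists id.
rewrite /= ; case: eqP => [->|_] sub.
  case: (IH _ sub) => k [k1 k2].
  exists (fun i => if i is i'.+1 then (k i').+1 else 0); split.
    case=> [|i] /=; first by [].
    by rewrite !ltnS => /k1.
  case=> [|i] /=; first by [].
  by rewrite ltnS => /k2 [? ?]; split.
case: (IH _ sub) => k [k1 k2].
exists (fun i => (k i).+1); split; first by move=> i /k1.
by move=> i /k2 [? ?].
Qed.

Fixpoint allw (l B : nat) : seq (seq nat) :=
  if l is l'.+1 then [seq x :: s | x <- iota 0 B, s <- allw l' B] else [:: [::]].

Lemma mem_allw l B s : size s = l -> all (fun x => x < B) s -> s \in allw l B.
Proof.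
elim: l s => [|l IH] [|x s] //=.
case=> sz /andP[xB sB]; apply: (allpairs_f (fun x s => x :: s)).
  by rewrite mem_iota.
exact: IH.
Qed.

Definition alphab L B := flatten [seq allw l B | l <- iota 0 L].

Lemma mem_alphab L B s : size s < L -> all (fun x => x < B) s -> s \in alphab L B.
Proof.
move=> sL aB; apply/flattenP; exists (allw (size s) B).
  by apply: map_f; rewrite mem_iota.
exact: mem_allw.
Qed.

Lemma count_sum (J : Type) (r : seq J) (a : pred J) : count a r = \sum_(j <- r) a j.
Proof. by elim: r => [|x r IH]; rewrite ?big_nil ?big_cons //= IH. Qed.

Lemma sum_lt (W : seq nat) (g : nat -> nat) s :
  (forall p, p \in W -> g p < s) -> \sum_(p <- W) g p + size W <= size W * s.
Proof.
elim: W => [|x W IH] H; first by rewrite big_nil.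
rewrite big_cons /=.
have h1 := H x (mem_head _ _).
have h2 := IH (fun p pW => H p ltac:(by rewrite in_cons pW orbT)).
rewrite mulSn; lia.
Qed.

Lemma sum_ge (I : seq nat) (g : nat -> nat) q :
  (forall k, k \in I -> q <= g k) -> size I * q <= \sum_(k <- I) g k.
Proof.
elim: I => [|x I IH] H; first by rewrite big_nil.
rewrite big_cons /=.
have h1 := H x (mem_head _ _).
have h2 := IH (fun p pW => H p ltac:(by rewrite in_cons pW orbT)).
rewrite mulSn; lia.
Qed.

Section Common.
Variable T : nat -> seq nat.
Variable M K : nat.

Lemma avg (W I : seq nat) q : size W <= K -> K <= 2*M*q -> 0 < q -> 0 < size I ->
  (forall k, k \in I -> q <= count (mem (T k)) W) ->
  exists2 p, p \in W & size I <= 2*M * count (fun k => p \in T k) I.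
Proof.
move=> sW Kq q0 I0 HI.
have E : \sum_(p <- W) count (fun k => p \in T k) I =
         \sum_(k <- I) count (mem (T k)) W.
  under eq_bigr => p _ do rewrite count_sum.
  rewrite exchange_big /=; apply: eq_bigr => k _; by rewrite count_sum.
have ge := sum_ge HI; rewrite -E in ge.
apply: NNPP => Hn.
have lt : forall p, p \in W -> 2*M * count (fun k => p \in T k) I < size I.
  move=> p pW; rewrite ltnNge; apply/negP => le; apply: Hn; by exists p.
have h3 := sum_lt lt; rewrite -big_distrr /= in h3.
have h4 : size W * size I <= 2*M*q * size I by rewrite leq_mul2r (leq_trans sW Kq) orbT.
move: ge h3; set S := \sum_(_ <- _) _ => ge h3.
have h5 : 2 * M * (size I * q) <= 2 * M * S by rewrite leq_mul2l ge orbT.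
have W0 : 0 < size W.
  rewrite lt0n; apply/negP => /eqP /size0nil W0.
  move: ge; rewrite /S W0 big_nil; nia.
nia.
Qed.

Lemma iter_common r : forall q (W I : seq nat),
  r <= q -> K <= 2*M*(q - r) -> uniq W -> size W <= K ->
  (forall k, k \in I -> q <= count (mem (T k)) W) ->
  exists C I', [/\ (0 < size I -> [/\ uniq C, size C = r & {subset C <= W}]),
     subseq I' I, size I <= size I' * (2*M)^r &
     forall k, k \in I' -> {subset C <= T k}].
Proof.
elim: r => [|r IH] q W I rq Kq uW sW HI.
  exists [::], I; split=> //; by rewrite expn0 muln1.
case: (posnP (size I)) => [I0|I0].
  exists [::], [::]; split.
  - by [].
  - by rewrite sub0seq.
  - by move: I0 => /eqP; rewrite size_eq0 => /eqP ->.
  - by [].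
have q0 : 0 < q by apply: leq_trans rq.
have Kq' : K <= 2*M*q by apply: (leq_trans Kq); rewrite leq_mul2l leq_subr orbT.
case: (avg sW Kq' q0 I0 HI) => p pW hp.
set I1 := filter (fun k => p \in T k) I.
set W1 := rem p W.
have uW1 : uniq W1 by apply: rem_uniq.
have sW1 : size W1 <= K by rewrite /W1 size_rem //; apply: leq_trans sW; apply: leq_pred.
have HI1 : forall k, k \in I1 -> q.-1 <= count (mem (T k)) W1.
  move=> k; rewrite mem_filter => /andP[pk kI].
  have := HI k kI; rewrite (permP (perm_to_rem pW)) /= -/W1.
  rewrite [X in X + _]/= pk add1n; by move=> h; rewrite -ltnS; apply: leq_trans h; rewrite -(ltn_predK q0).
have rq1 : r <= q.-1 by rewrite -ltnS (ltn_predK q0).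
have Kq1 : K <= 2*M*(q.-1 - r) by have -> : q.-1 - r = q - r.+1 by lia.
case: (IH q.-1 W1 I1 rq1 Kq1 uW1 sW1 HI1) => C [I' [H1 H2 H3 H4]].
exists (p :: C), I'; split.
- move=> _.
  have I10 : 0 < size I1.
    rewrite /I1 size_filter lt0n; apply/negP => /eqP c0; move: hp; rewrite c0 muln0; by rewrite leqNgt I0.
  case: (H1 I10) => uC sC CW; split=> /=.
  + rewrite uC andbT; apply/negP => /CW; by rewrite (mem_rem_uniq _ uW) inE eqxx.
  + by rewrite sC.
  + move=> x; rewrite in_cons => /orP[/eqP->//|/CW]; exact: mem_rem.
- apply: subseq_trans H2 _; exact: filter_subseq.
- apply: (leq_trans hp); rewrite expnS.
  have : count (fun k => p \in T k) I <= size I' * (2 * M) ^ r by rewrite -size_filter.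
  move=> h; have := leq_mul (leqnn (2*M)) h; lia.
- move=> k kI x; rewrite in_cons => /orP[/eqP->|xC].
    by move: (mem_subseq H2 kI); rewrite mem_filter => /andP[].
  exact: H4.
Qed.
End Common.

Lemma RL_at M S i : is_RL M S -> i < rl_n S ->
  [/\ sorted ltn (rl_at S i), size (rl_at S i) = rl_d S &
      forall x, x \in rl_at S i -> (1 <= x) && (x <= M * rl_d S)].
Proof.
move=> /(all_nthP [::]) H iS; have /and3P[s1 /eqP s2 s3] := H i iS.
split=> // x xS; exact: (allP s3 x xS).
Qed.

Lemma le_RL_nil S T : rl_n S = 0 -> le_RL S T.
Proof. by move=> S0; exists id, (fun _ x => x); split=> i; rewrite S0. Qed.

Lemma embed M S T : is_RL M S -> is_RL M T -> 2 * (M * rl_d S) <= rl_d T ->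
  rl_n S * (2*M)^(M * rl_d S) <= rl_n T -> le_RL S T.
Proof.
move=> RS RT dT nT.
set r := M * rl_d S in dT nT.
set e := rl_d T in dT.
case: (posnP (rl_n S)) => [S0|S0]; first exact: le_RL_nil.
have X0 : 0 < (2*M)^r.
  rewrite expn_gt0; case: (posnP M) => [M0|M0]; last by rewrite muln_gt0 M0.
  by rewrite /r M0 mul0n eqxx orbT.
have T0 : 0 < rl_n T by apply: leq_trans nT; rewrite muln_gt0 S0.
have HI : forall k, k \in iota 0 (rl_n T) -> e <= count (mem (rl_at T k)) (iota 1 (M*e)).
  move=> k; rewrite mem_iota add0n => kT.
  case: (RL_at RT kT) => s1 s2 s3.
  rewrite -size_filter /e -s2; apply: uniq_leq_size.
    exact: (sorted_uniq ltn_trans ltnn).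
  move=> x xA; rewrite mem_filter /= xA mem_iota /=.
  move: (s3 x xA) => /andP[h1 h2]; by rewrite add1n ltnS s2 h1 h2.
have rq : r <= e by lia.
have Kq : M * e <= 2*M*(e - r) by nia.
case: (iter_common (T := rl_at T) rq Kq (iota_uniq 1 (M*e)) _ HI) => [|C [I' [H1 H2 H3 H4]]].
  by rewrite size_iota.
rewrite size_iota in H1 H3.
case: (H1 T0) => uC sC _.
have nI : rl_n S <= size I'.
  by rewrite -(leq_pmul2r X0); apply: leq_trans nT H3.
have sI : sorted ltn I' := subseq_sorted ltn_trans H2 (iota_ltn_sorted 0 _).
set C' := sort leq C.
have sC' : sorted ltn C' by rewrite ltn_sorted_uniq_leq sort_uniq uC sort_sorted //; exact: leq_total.
have szC' : size C' = r by rewrite size_sort.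
exists (fun i => nth 0 I' i), (fun _ x => nth 0 C' x.-1); split.
- move=> i iS; have h1 : i < size I' by lia.
  have h2 : i.+1 < size I' by lia.
  by apply: (sorted_ltn_nth ltn_trans 0 sI).
- move=> i iS; have : nth 0 I' i \in iota 0 (rl_n T).
    apply: (mem_subseq H2); apply: mem_nth; lia.
  by rewrite mem_iota.
- move=> i x iS xS; apply: H4; first by apply: mem_nth; lia.
  rewrite -(mem_sort leq); apply: mem_nth.
  case: (RL_at RS iS) => _ _ /(_ x xS) /andP[]; rewrite szC' /r; lia.
- move=> i x y iS xS yS xy.
  case: (RL_at RS iS) => _ _ H.
  move: (H x xS) (H y yS) => /andP[hx1 hx2] /andP[hy1 hy2].
  have h1 : x.-1 < size C' by rewrite szC' /r; lia.
  have h2 : y.-1 < size C' by rewrite szC' /r; lia.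
  have h3 : x.-1 < y.-1 by lia.
  by apply: (sorted_ltn_nth ltn_trans 0 sC').
- by [].
Qed.

Unset Implicit Arguments.
Theorem mainTheorem4 (M : nat) (S : nat -> RL) :
  is_infinite_antichain M S ->
  (exists B, forall i, rl_n (S i) <= B) \/ (exists B, forall i, rl_d (S i) <= B).
Proof.
move=> [RLS anti]; left; apply: NNPP => nb.
have unb : forall B, exists i, B < rl_n (S i).
  move=> B; apply: NNPP => h; apply: nb; exists B => i; rewrite leqNgt.
  by apply/negP => hi; apply: h; exists i.
set r := M * rl_d (S 0).
set N := rl_n (S 0) * (2*M)^r.
have X0 : 0 < (2*M)^r.
  rewrite expn_gt0; case: (posnP M) => [M0|M0]; last by rewrite muln_gt0 M0.
  by rewrite /r M0 mul0n eqxx orbT.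
have n0N : rl_n (S 0) <= N by rewrite /N leq_pmulr.
have key : forall j, N < rl_n (S j) -> rl_d (S j) < 2 * r.
  move=> j hj; rewrite ltnNge; apply/negP => dj.
  have j0 : j <> 0 by move=> E; move: hj; rewrite E ltnNge n0N.
  apply: (anti 0 j (nesym j0)); apply: embed => //; exact: ltnW.
pose nxt B := ex_minn (unb B).
have nxtP : forall B, B < rl_n (S (nxt B)).
  by move=> B; rewrite /nxt; case: ex_minnP.
pose J k := iter k (fun j => nxt (\max_(i < j.+1) rl_n (S i))) (nxt N).
have JN : forall k, N < rl_n (S (J k)).
  elim=> [|k IH]; first exact: nxtP.
  rewrite /J iterS -/(J k); apply: leq_ltn_trans (nxtP _).
  apply: leq_trans (ltnW IH) _.
  exact: (@leq_bigmax _ (fun i : 'I_(J k).+1 => rl_n (S i)) (Ordinal (ltnSn (J k)))).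
have JS : forall k, J k < J k.+1.
  move=> k; rewrite /J iterS -/(J k); set B := \max_(i < _) _.
  have := nxtP B; rewrite ltnNge; apply: contraR; rewrite -leqNgt => h.
  rewrite -ltnS in h.
  exact: (@leq_bigmax _ (fun i : 'I_(J k).+1 => rl_n (S i)) (Ordinal h)).
have Jmono : forall k1 k2, k1 < k2 -> J k1 < J k2.
  move=> k1; elim=> // k2 IH; rewrite ltnS leq_eqVlt => /orP[/eqP->//|lt].
  exact: ltn_trans (IH lt) (JS k2).
pose w k := rl_sets (S (J k)).
have walph : forall k, {subset w k <= alphab (2 * r) (M * (2 * r)).+1}.
  move=> k x /(nthP [::]) [i iS <-].
  have dJ := key _ (JN k).
  case: (RL_at (RLS (J k)) iS) => _ s2 s3.
  apply: mem_alphab; first by rewrite /rl_at in s2; rewrite s2.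
  apply/allP => y yS; move: (s3 y yS) => /andP[_ h]; rewrite ltnS.
  apply: leq_trans h _; rewrite leq_mul2l; apply/orP; right; exact: ltnW.
case: (higman walph) => a [b [ab sub]].
case: (subseq_idx sub) => k [k1 k2].
apply: (anti (J a) (J b)).
  by move=> E; move: (Jmono _ _ ab); rewrite E ltnn.
exists k, (fun _ x => x); split.
- exact: k1.
- by move=> i /k2 [].
- by move=> i x /k2 [_ E]; rewrite /rl_at -E.
- by [].
- by [].
Qed.
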